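(* Let $\tau$ be a $T_1$-topology on the bicyclic monoid $\mathcal{C}(p,q)$ such that $(\mathcal{C}(p,q),\tau)$ is a topological inverse semigroup (the semigroup operation is jointly continuous and the inversion is continuous). If there exists a point $q^ip^j\in\mathcal{C}(p,q)$ such that the subspace $\updownarrow_{\preceq} q^ip^j$ of $(\mathcal{C}(p,q),\tau)$ is quasi-regular at $q^ip^j$, then $\tau$ is discrete.
   Context: The bicyclic monoid $\mathcal{C}(p,q)$ is the monoid with identity $1$ generated by two elements $p,q$ subject only to $pq=1$. Every element has a unique form $q^ip^j$ with $i,j\in\omega$, and multiplication is $q^kp^l\cdot q^mp^n = q^{k-l+m}p^n$ if $l<m$, $=q^kp^n$ if $l=m$, $=q^kp^{l-m+n}$ if $l>m$. It is an inverse semigroup with $(q^ip^j)^{-1}=q^jp^i$. The natural partial order $\preceq$ on it is: $s\preceq t$ iff $s=te$ for some idempotent $e$; equivalently $q^ip^j\preceq q^sp^t$ iff $i\ge s$ and $i-j=s-t$. For $x\in\mathcal{C}(p,q)$, $\uparrow_{\preceq}x=\{y: x\preceq y\}$, $\downarrow_{\preceq}x=\{y: y\preceq x\}$, and $\updownarrow_{\preceq}x=\uparrow_{\preceq}x\cup\downarrow_{\preceq}x$ (so $\updownarrow_{\preceq}q^ip^j=\{q^sp^t: s-t=i-j\}$). A subspace $Y$ of a topological space is quasi-regular at a point $x\in Y$ if for every open neighbourhood $U$ of $x$ in $Y$ there is a nonempty open subset $V$ of $Y$ with $\mathrm{cl}_Y(V)\subseteq U$. *)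

(* Defs.v *)
From Stdlib Require Import Arith Lia.

(* The element q^i p^j of the bicyclic monoid C(p,q) is encoded as the pair (i,j). *)
Definition bicyclic := (nat * nat)%type.

Definition bmul (x y : bicyclic) : bicyclic :=
  let '(k, l) := x in let '(m, n) := y in
  if Nat.ltb l m then (k + (m - l), n)
  else if Nat.eqb l m then (k, n)
  else (k, (l - m) + n).

Definition binv (x : bicyclic) : bicyclic := let '(i, j) := x in (j, i).

(* Updownarrow of q^i p^j w.r.t. the natural partial order:
   { q^s p^t : s - t = i - j } (difference in the integers). *)
Definition updown (x : bicyclic) : bicyclic -> Prop :=
  fun y => fst y + snd x = snd y + fst x.

Definition is_topology {X : Type} (O : (X -> Prop) -> Prop) : Prop :=
  O (fun _ => True) /\
  (forall U V, O U -> O V -> O (fun x => U x /\ V x)) /\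
  (forall F : (X -> Prop) -> Prop, (forall U, F U -> O U) ->
     O (fun x => exists U, F U /\ U x)).

Definition T1 {X : Type} (O : (X -> Prop) -> Prop) : Prop :=
  forall x y : X, x <> y -> exists U, O U /\ U x /\ ~ U y.

Definition bmul_continuous (O : (bicyclic -> Prop) -> Prop) : Prop :=
  forall x y W, O W -> W (bmul x y) ->
    exists U V, O U /\ O V /\ U x /\ V y /\
      (forall a b, U a -> V b -> W (bmul a b)).

Definition binv_continuous (O : (bicyclic -> Prop) -> Prop) : Prop :=
  forall W, O W -> O (fun x => W (binv x)).

Definition topological_inverse_semigroup (O : (bicyclic -> Prop) -> Prop) : Prop :=
  is_topology O /\ bmul_continuous O /\ binv_continuous O.

Definition subspace_open {X : Type} (O : (X -> Prop) -> Prop) (Y A : X -> Prop) : Prop :=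
  (forall x, A x -> Y x) /\
  exists U, O U /\ (forall x, A x <-> (Y x /\ U x)).

Definition subspace_closure {X : Type} (O : (X -> Prop) -> Prop) (Y V : X -> Prop) : X -> Prop :=
  fun y => Y y /\ forall W, subspace_open O Y W -> W y -> exists z, W z /\ V z.

Definition quasi_regular_at {X : Type} (O : (X -> Prop) -> Prop) (Y : X -> Prop) (x : X) : Prop :=
  Y x /\
  forall U, subspace_open O Y U -> U x ->
    exists V, subspace_open O Y V /\ (exists z, V z) /\
      (forall y, subspace_closure O Y V y -> U y).

Definition discrete {X : Type} (O : (X -> Prop) -> Prop) : Prop :=
  forall A : X -> Prop, O A.

(* Main.v *)
Require Import Defs.
From Stdlib Require Import Arith Lia Classical FunctionalExtensionality PropExtensionality.

Ltac bm := repeat (cbv beta iota zeta delta [bmul] in *;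
  match goal with
  | |- context [Nat.ltb ?a ?b] => destruct (Nat.ltb_spec a b)
  | |- context [Nat.eqb ?a ?b] => destruct (Nat.eqb_spec a b)
  | H : context [Nat.ltb ?a ?b] |- _ => destruct (Nat.ltb_spec a b)
  | H : context [Nat.eqb ?a ?b] |- _ => destruct (Nat.eqb_spec a b)
  end).

Definition cont (O : (bicyclic -> Prop) -> Prop) (f : bicyclic -> bicyclic) :=
  forall W, O W -> O (fun z => W (f z)).

Lemma open_local O : is_topology O -> forall A : bicyclic -> Prop,
  (forall z, A z -> exists U, O U /\ U z /\ forall w, U w -> A w) -> O A.
Proof.
  intros [_ [_ Hu]] A H.
  assert (E : A = (fun x => exists U, (O U /\ forall w, U w -> A w) /\ U x)).
  { apply functional_extensionality; intro x; apply propositional_extensionality; split.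
    - intro Ax. destruct (H x Ax) as [U [HU [Ux HUA]]]. exists U. auto.
    - intros [U [[_ HUA] Ux]]. auto. }
  rewrite E. apply Hu. intros U [HU _]; exact HU.
Qed.

Lemma open_and O : is_topology O -> forall U V : bicyclic -> Prop, O U -> O V -> O (fun x => U x /\ V x).
Proof. intros [_ [H _]]; auto. Qed.

Lemma open_true O : is_topology O -> O (fun _ : bicyclic => True).
Proof. intros [H _]; auto. Qed.

Lemma cont_const O : is_topology O -> forall c, cont O (fun _ => c).
Proof.
  intros HT c W HW. apply open_local; auto. intros z Hz.
  exists (fun _ => True). split; [apply open_true; auto| split; auto].
Qed.

Lemma cont_id O : cont O (fun z => z).
Proof. intros W HW. exact HW. Qed.

Lemma cont_mul O : is_topology O -> bmul_continuous O -> forall f g, cont O f -> cont O g ->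
  cont O (fun z => bmul (f z) (g z)).
Proof.
  intros HT HM f g Hf Hg W HW. apply open_local; auto. intros z Hz.
  destruct (HM (f z) (g z) W HW Hz) as [U [V [HU [HV [Uf [Vg HUV]]]]]].
  exists (fun w => U (f w) /\ V (g w)). split.
  - apply open_and; auto.
  - split; auto. intros w [H1 H2]; auto.
Qed.

Lemma cont_inv O : binv_continuous O -> forall f, cont O f -> cont O (fun z => binv (f z)).
Proof. intros HI f Hf W HW. apply (Hf (fun z => W (binv z))). apply HI; auto. Qed.

Lemma open_neq O : is_topology O -> T1 O -> forall w : bicyclic, O (fun z => z <> w).
Proof.
  intros HT H1 w. apply open_local; auto. intros z Hz.
  destruct (H1 z w Hz) as [U [HU [Uz Uw]]]. exists U. split; auto. split; auto.
  intros u Uu E. subst. auto.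
Qed.

Lemma finrem O : is_topology O -> T1 O -> forall (g : nat -> bicyclic) c N,
  exists G, O G /\ G c /\ forall a, a < N -> G (g a) -> g a = c.
Proof.
  intros HT H1 g c N. induction N as [|N IH].
  - exists (fun _ => True). split; [apply open_true; auto|]. split; auto. intros; lia.
  - destruct IH as [G [HG [Gc HGa]]].
    exists (fun z => G z /\ (z = c \/ z <> g N)). split; [|split; auto].
    + apply open_and; auto. apply open_local; auto. intros z Hz.
      destruct (classic (z = g N)) as [E|E].
      * destruct Hz as [Hz|Hz]; [|contradiction]. exists (fun _ => True).
        split; [apply open_true; auto|]. split; auto. intros w _.
        destruct (classic (w = g N)); [left; congruence | right; auto].
      * exists (fun z => z <> g N). split; [apply open_neq; auto|]. split; auto.
    + intros a Ha [Ga Hc]. destruct (Nat.eq_dec a N) as [->|Hn].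
      * destruct Hc; [auto| congruence].
      * apply HGa; auto. lia.
Qed.

Lemma bmul_idem_deep s t c : c <= t -> bmul (s,t) (c,c) = (s,t).
Proof. intros H. bm; f_equal; lia. Qed.

Lemma bmul_idem_shallow s t c : t <= c -> bmul (s,t) (c,c) = (s + c - t, c).
Proof. intros H. bm; f_equal; lia. Qed.

Lemma shift O : is_topology O -> bmul_continuous O -> forall i j (y1 y2 : bicyclic) W,
  fst y1 + j = snd y1 + i -> fst y2 + j = snd y2 + i -> fst y1 <= fst y2 -> O W -> W y2 ->
  exists G, O G /\ G y1 /\ forall z, fst z + j = snd z + i -> fst y2 <= fst z -> G z -> W z.
Proof.
  intros HT HM i j [s1 t1] [s2 t2] W Y1 Y2 Hle HW Wy. simpl in *.
  exists (fun z => W (bmul z (t2,t2))). split; [|split].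
  - apply (cont_mul O HT HM (fun z => z) (fun _ => (t2,t2))); auto.
    apply cont_id. apply cont_const; auto.
  - rewrite bmul_idem_shallow by lia. replace (s1 + t2 - t1) with s2 by lia. exact Wy.
  - intros [s t] Y Hs Gz. rewrite bmul_idem_deep in Gz; [exact Gz| simpl in *; lia].
Qed.

Lemma Yiso O : is_topology O -> bmul_continuous O -> T1 O -> forall i j,
  quasi_regular_at O (updown (i,j)) (i,j) ->
  exists G, O G /\ G (i,j) /\ forall y, updown (i,j) y -> G y -> y = (i,j).
Proof.
  intros HT HM H1 i j [_ QR].
  apply NNPP. intro NI.
  assert (NI' : forall G, O G -> G (i,j) -> exists y, updown (i,j) y /\ G y /\ y <> (i,j)).
  { intros G HG Gx. apply NNPP. intro C. apply NI. exists G. split; auto. split; auto.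
    intros y Yy Gy. apply NNPP. intro Hne. apply C. exists y. auto. }
  clear NI.
  set (g := fun a => (a, a + j - i)).
  assert (Hg : forall z, updown (i,j) z -> z = g (fst z)).
  { intros [s t] Y. unfold updown, g in *. simpl in *. f_equal. lia. }
  assert (DAx : forall G, O G -> G (i,j) -> forall N, exists z, updown (i,j) z /\ G z /\ N <= fst z).
  { intros G HG Gx N. destruct (finrem O HT H1 g (i,j) N) as [G' [HG' [G'x HG'a]]].
    destruct (NI' (fun z => G z /\ G' z)) as [y [Yy [[Gy G'y] Hne]]].
    - apply open_and; auto.
    - auto.
    - exists y. split; auto. split; auto. destruct (le_lt_dec N (fst y)) as [h|h]; auto.
      exfalso. apply Hne. rewrite (Hg y Yy) in G'y |- *. auto. }
  assert (DA : forall y, updown (i,j) y -> i <= fst y -> forall G, O G -> G y -> forall N,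
      exists z, updown (i,j) z /\ G z /\ N <= fst z).
  { intros y Yy Hi G HG Gy N.
    destruct (shift O HT HM i j (i,j) y G ltac:(simpl; lia) Yy ltac:(simpl; lia) HG Gy) as [G0 [HG0 [G0x HG0d]]].
    destruct (DAx G0 HG0 G0x (max N (fst y))) as [z [Yz [G0z Hz]]].
    exists z. split; auto. split; [|lia]. apply HG0d; auto. lia. }
  assert (Meet : forall a b, updown (i,j) a -> updown (i,j) b -> i <= fst a -> i <= fst b ->
      forall A B, O A -> O B -> A a -> B b -> exists z, updown (i,j) z /\ A z /\ B z).
  { assert (W : forall a b, updown (i,j) a -> updown (i,j) b -> i <= fst a -> fst a <= fst b ->
      forall A B, O A -> O B -> A a -> B b -> exists z, updown (i,j) z /\ A z /\ B z).
    { intros a b Ya Yb Ha Hab A B HA HB Aa Bb.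
      destruct (shift O HT HM i j a b B Ya Yb Hab HB Bb) as [G [HG [Ga HGd]]].
      destruct (DA a Ya Ha (fun z => G z /\ A z) (open_and O HT _ _ HG HA) (conj Ga Aa) (fst b))
        as [z [Yz [[Gz Az] Hz]]].
      exists z. split; [exact Yz|]. split; [exact Az|]. exact (HGd z Yz Hz Gz). }
    intros a b Ya Yb Ha Hb A B HA HB Aa Bb.
    destruct (le_lt_dec (fst a) (fst b)) as [h|h].
    - exact (W a b Ya Yb Ha h A B HA HB Aa Bb).
    - destruct (W b a Yb Ya Hb ltac:(lia) B A HB HA Bb Aa) as [z [? [? ?]]]. exists z; auto. }
  destruct (finrem O HT H1 g (i,j) i) as [G1 [HG1 [G1x HG1a]]].
  set (w := (S i, S j)).
  destruct (QR (fun z => updown (i,j) z /\ (G1 z /\ z <> w))) as [V [[VY [Vo [HVo HV]]] [[v Vv] Hcl]]].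
  - split. { intros z [? _]; auto. }
    exists (fun z => G1 z /\ z <> w). split; [|intro; tauto].
    apply open_and; auto. apply open_neq; auto.
  - split. { unfold updown; simpl; lia. } split; auto. unfold w. intro E. injection E. lia.
  - assert (Uv : updown (i,j) v /\ (G1 v /\ v <> w)).
    { apply Hcl. split; auto. intros W' _ W'v. exists v. auto. }
    destruct Uv as [Yv [G1v _]].
    assert (Hv : i <= fst v).
    { destruct (le_lt_dec i (fst v)) as [h|h]; auto. exfalso.
      rewrite (Hg v Yv) in G1v. specialize (HG1a _ h G1v). unfold g in HG1a.
      injection HG1a. lia. }
    assert (Cw : subspace_closure O (updown (i,j)) V w).
    { split. { unfold updown, w; simpl; lia. }
      intros W' [W'Y [Wo [HWo HW']]] W'w.
      apply HW' in W'w. destruct W'w as [Yw Wow].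
      apply HV in Vv. destruct Vv as [_ Vov].
      destruct (Meet w v Yw Yv ltac:(unfold w; simpl; lia) Hv Wo Vo HWo HVo Wow Vov)
        as [z [Yz [Woz Voz]]].
      exists z. split; apply HW' || apply HV; auto. }
    destruct (Hcl w Cw) as [_ [_ Hn]]. apply Hn; reflexivity.
Qed.

Lemma phi_eq s t : bmul (s,t) (binv (s,t)) = (s,s).
Proof. simpl. bm; f_equal; lia. Qed.

Lemma psi_eq s t : bmul (binv (s,t)) (s,t) = (t,t).
Proof. simpl. bm; f_equal; lia. Qed.

Lemma r_comp i j s t : i <= s -> j <= t ->
  fst (bmul (bmul (s,s) (i,j)) (t,t)) + j = snd (bmul (bmul (s,s) (i,j)) (t,t)) + i /\
  (bmul (bmul (s,s) (i,j)) (t,t) = (i,j) -> s = i /\ t = j).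
Proof.
  intros Hs Ht. bm; simpl; split; try lia; intro E; inversion E; lia.
Qed.

Lemma r_x i j : bmul (bmul (i,i) (i,j)) (j,j) = (i,j).
Proof. bm; f_equal; lia. Qed.

Lemma F_comp i j a b s t : a <= s -> b <= t ->
  bmul (bmul (i,a) (s,t)) (b,j) = (i,j) -> s = a /\ t = b.
Proof. intros Hs Ht. bm; intro E; inversion E; lia. Qed.

Lemma F_y i j a b : bmul (bmul (i,a) (a,b)) (b,j) = (i,j).
Proof. bm; f_equal; lia. Qed.

Lemma deep_nbhd O : topological_inverse_semigroup O -> T1 O -> forall a b,
  exists H, O H /\ H (a,b) /\ forall z, H z -> a <= fst z /\ b <= snd z.
Proof.
  intros [HT [HM HI]] H1 a b.
  destruct (finrem O HT H1 (fun n => (n,n)) (a,a) a) as [Ga [HGa [Gaa HGaa]]].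
  destruct (finrem O HT H1 (fun n => (n,n)) (b,b) b) as [Gb [HGb [Gbb HGbb]]].
  exists (fun z => Ga (bmul z (binv z)) /\ Gb (bmul (binv z) z)). split; [|split].
  - apply open_and; auto.
    + refine (cont_mul O HT HM (fun z => z) (fun z => binv z) _ _ Ga HGa); [apply cont_id|].
      apply (cont_inv O HI (fun z => z)). apply cont_id.
    + refine (cont_mul O HT HM (fun z => binv z) (fun z => z) _ _ Gb HGb); [|apply cont_id].
      apply (cont_inv O HI (fun z => z)). apply cont_id.
  - rewrite phi_eq, psi_eq. auto.
  - intros [s t] [E1 E2]. rewrite phi_eq in E1. rewrite psi_eq in E2. simpl. split.
    + destruct (le_lt_dec a s) as [h|h]; auto. specialize (HGaa s h E1). injection HGaa; lia.
    + destruct (le_lt_dec b t) as [h|h]; auto. specialize (HGbb t h E2). injection HGbb; lia.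
Qed.

Lemma cont_F O : topological_inverse_semigroup O -> forall c d, cont O (fun z => bmul (bmul c z) d).
Proof.
  intros [HT [HM HI]] c d.
  apply (cont_mul O HT HM (fun z => bmul c z) (fun _ => d)); [|apply cont_const; auto].
  apply (cont_mul O HT HM (fun _ => c) (fun z => z)); [apply cont_const; auto| apply cont_id].
Qed.

Theorem theorem2 (O : (bicyclic -> Prop) -> Prop) :
  topological_inverse_semigroup O -> T1 O ->
  (exists x : bicyclic, quasi_regular_at O (updown x) x) ->
  discrete O.
Proof.
  intros TIS H1 [[i j] QR].
  pose proof TIS as [HT [HM HI]].
  destruct (Yiso O HT HM H1 i j QR) as [G [HG [Gx HGY]]].
  destruct (deep_nbhd O TIS H1 i j) as [Hx [HHx [Hxx HHxd]]].
  set (r := fun z => bmul (bmul (bmul z (binv z)) (i,j)) (bmul (binv z) z)).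
  assert (Hr : cont O r).
  { unfold r. apply (cont_mul O HT HM (fun z => bmul (bmul z (binv z)) (i,j)) (fun z => bmul (binv z) z)).
    - apply (cont_mul O HT HM (fun z => bmul z (binv z)) (fun _ => (i,j))); [|apply cont_const; auto].
      apply (cont_mul O HT HM (fun z => z) (fun z => binv z)); [apply cont_id|].
      apply (cont_inv O HI (fun z => z)). apply cont_id.
    - apply (cont_mul O HT HM (fun z => binv z) (fun z => z)); [|apply cont_id].
      apply (cont_inv O HI (fun z => z)). apply cont_id. }
  assert (Kx : exists K, O K /\ K (i,j) /\ forall z, K z -> z = (i,j)).
  { exists (fun z => G (r z) /\ Hx z). split; [|split].
    - apply open_and; [exact HT | apply Hr; exact HG | exact HHx].
    - split; auto. unfold r. rewrite phi_eq, psi_eq, r_x. exact Gx.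
    - intros [s t] [Gr Hz]. destruct (HHxd _ Hz) as [hs ht]. simpl in hs, ht.
      unfold r in Gr. rewrite phi_eq, psi_eq in Gr.
      destruct (r_comp i j s t hs ht) as [Y E].
      specialize (HGY _ Y Gr). destruct (E HGY). subst. reflexivity. }
  destruct Kx as [K [HK [Kx HKx]]].
  assert (Sing : forall y, exists U, O U /\ U y /\ forall z, U z -> z = y).
  { intros [a b]. destruct (deep_nbhd O TIS H1 a b) as [Hy [HHy [Hyy HHyd]]].
    exists (fun z => K (bmul (bmul (i,a) z) (b,j)) /\ Hy z). split; [|split].
    - apply open_and; auto. apply (cont_F O TIS); auto.
    - split; auto. rewrite F_y. exact Kx.
    - intros [s t] [Kz Hz]. destruct (HHyd _ Hz) as [hs ht]. simpl in hs, ht.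
      apply HKx in Kz. destruct (F_comp i j a b s t hs ht Kz). subst. reflexivity. }
  intro A. apply open_local; auto. intros z Az.
  destruct (Sing z) as [U [HU [Uz HUz]]]. exists U. split; auto. split; auto.
  intros w Uw. rewrite (HUz w Uw). exact Az.
Qed.
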